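(* Fix $n\ge1$, pairwise distinct constants $\lambda_1,\dots,\lambda_n$ and arbitrary constants $\alpha_1,\dots,\alpha_n$. Consider the system \[ y_{j,xx}=\frac{y_{j,x}^2-\alpha_j^2}{2y_j}+2(u-\lambda_j)y_j,\qquad (\mathrm{A}) \] \[ y_{j,t}=2u_xy_j-2(u+2\lambda_j)y_{j,x},\qquad (\mathrm{B}) \] $j=1,\dots,n$, where $u:=\frac{x}{6t}+\frac{1}{3t}(y_1+\dots+y_n)$ ($t\neq0$). Regard (A) as expressing $y_{j,xx}$ as a function of $x,t,y_1,y_{1,x},\dots,y_n,y_{n,x}$, and (B) as expressing $y_{j,t}$ in these variables, the $t$-derivative of $y_{j,x}$ being obtained by differentiating (B) with respect to $x$ and eliminating second $x$-derivatives by (A). Then the system is consistent: $(y_{j,xx})_t=(y_{j,t})_{xx}$ holds identically in $x,t,y_k,y_{k,x}$ when both sides are computed by virtue of (A), (B). Moreover, by virtue of (A), (B), the function $u$ satisfies the KdV equation $u_t=u_{xxx}-6uu_x$.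
   Context: All $y_j$ are assumed nonzero where the equations are considered. Subscripts $x,t$ denote partial derivatives. *)

(* Defs.v *)
From Stdlib Require Import Reals.
From Coquelicot Require Import Coquelicot.
Open Scope R_scope.

Fixpoint rsum (n : nat) (f : nat -> R) : R :=
  match n with O => 0 | S m => rsum m f + f m end.

(* A function on the jet space with coordinates
   x, t, y = (y_0, y_1, ...), p = (p_0, p_1, ...)  where p_k stands for y_{k,x}.
   Only indices k < n are relevant. *)
Definition jet := R -> R -> (nat -> R) -> (nat -> R) -> R.

Definition upd (y : nat -> R) (k : nat) (s : R) : nat -> R :=
  fun i => if Nat.eqb i k then s else y i.

Definition d_x (f : jet) : jet := fun x t y p => Derive (fun s => f s t y p) x.
Definition d_t (f : jet) : jet := fun x t y p => Derive (fun s => f x s y p) t.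
Definition d_y (k : nat) (f : jet) : jet :=
  fun x t y p => Derive (fun s => f x t (upd y k s) p) (y k).
Definition d_p (k : nat) (f : jet) : jet :=
  fun x t y p => Derive (fun s => f x t y (upd p k s)) (p k).

(* total x-derivative by virtue of  y_{k,x} = p_k,  p_{k,x} = Fxx k *)
Definition TDx (n : nat) (Fxx : nat -> jet) (f : jet) : jet :=
  fun x t y p =>
    d_x f x t y p
    + rsum n (fun k => p k * d_y k f x t y p)
    + rsum n (fun k => Fxx k x t y p * d_p k f x t y p).

(* total t-derivative by virtue of  y_{k,t} = Gt k,  p_{k,t} = Ht k *)
Definition TDt (n : nat) (Gt Ht : nat -> jet) (f : jet) : jet :=
  fun x t y p =>
    d_t f x t y p
    + rsum n (fun k => Gt k x t y p * d_y k f x t y p)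
    + rsum n (fun k => Ht k x t y p * d_p k f x t y p).

Definition u_fn (n : nat) : jet :=
  fun x t y p => x / (6 * t) + / (3 * t) * rsum n y.

Definition FA (n : nat) (lam alp : nat -> R) (j : nat) : jet :=
  fun x t y p =>
    (p j ^ 2 - alp j ^ 2) / (2 * y j) + 2 * (u_fn n x t y p - lam j) * y j.

Definition ux_fn (n : nat) (lam alp : nat -> R) : jet :=
  TDx n (FA n lam alp) (u_fn n).

Definition GB (n : nat) (lam alp : nat -> R) (j : nat) : jet :=
  fun x t y p =>
    2 * ux_fn n lam alp x t y p * y j
    - 2 * (u_fn n x t y p + 2 * lam j) * p j.

(* y_{j,xt}: x-derivative of (B), eliminating second x-derivatives by (A) *)
Definition HB (n : nat) (lam alp : nat -> R) (j : nat) : jet :=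
  TDx n (FA n lam alp) (GB n lam alp j).

Definition TotDx (n : nat) (lam alp : nat -> R) : jet -> jet := TDx n (FA n lam alp).
Definition TotDt (n : nat) (lam alp : nat -> R) : jet -> jet :=
  TDt n (GB n lam alp) (HB n lam alp).

(* Main.v *)
Require Import Defs.
From Stdlib Require Import Reals Lra Lia.
From Coquelicot Require Import Coquelicot.
Open Scope R_scope.

Lemma rsum_ext n f g : (forall k, (k < n)%nat -> f k = g k) -> rsum n f = rsum n g.
Proof. induction n; simpl; intros H; auto. rewrite IHn by (intros; apply H; lia). rewrite H by lia. reflexivity. Qed.

Lemma rsum_plus n f g : rsum n f + rsum n g = rsum n (fun k => f k + g k).
Proof. induction n; simpl; [ring|]. rewrite <- IHn. ring. Qed.

Lemma rsum_delta n j V : (j < n)%nat -> rsum n (fun k => if Nat.eqb j k then V else 0) = V.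
Proof.
  induction n; intros H; [lia|]. simpl.
  destruct (Nat.eqb_spec j n).
  - subst. rewrite ?Nat.eqb_refl. rewrite (rsum_ext _ _ (fun _ => 0)). 2:{ intros k Hk. destruct (Nat.eqb_spec n k); [lia|auto]. }
    assert (E: forall m, rsum m (fun _ => 0) = 0) by (induction m; simpl; [ring|rewrite IHm; ring]).
    rewrite E; ring.
  - rewrite IHn by lia. ring.
Qed.

Lemma rsum_upd_out n (g : nat -> R -> R) y k s : (n <= k)%nat ->
  rsum n (fun m => g m (upd y k s m)) = rsum n (fun m => g m (y m)).
Proof. intros H. apply rsum_ext. intros m Hm. unfold upd. destruct (Nat.eqb_spec m k); [lia|auto]. Qed.

Lemma rsum_upd_gen n (g : nat -> R -> R) y k s : (k < n)%nat ->
  rsum n (fun m => g m (upd y k s m)) = rsum n (fun m => g m (y m)) + (g k s - g k (y k)).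
Proof.
  induction n; intros H; [lia|]. simpl.
  destruct (Nat.eqb_spec k n).
  - subst. rewrite rsum_upd_out by lia. unfold upd. rewrite Nat.eqb_refl. ring.
  - rewrite IHn by lia. unfold upd. destruct (Nat.eqb_spec n k); [lia|]. ring.
Qed.

Lemma rsum_upd n y k s : (k < n)%nat -> rsum n (upd y k s) = rsum n y + (s - y k).
Proof. intros H. exact (rsum_upd_gen n (fun m v => v) y k s H). Qed.

Lemma rsum_S n f : rsum (S n) f = rsum n f + f n.
Proof. reflexivity. Qed.

Definition Ag n (alp : nat -> R) (y p : nat -> R) := rsum n (fun m => (p m ^ 2 - alp m ^ 2) / (2 * y m)).
Definition Lg n (lam : nat -> R) (y : nat -> R) := rsum n (fun m => lam m * y m).

Definition Fof n lam alp (Phi : R -> R -> R -> R -> R -> R -> R -> R -> R) (j : nat) : jet :=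
  fun x t y p => Phi x t (y j) (p j) (rsum n y) (rsum n p) (Ag n alp y p) (Lg n lam y).

Lemma dy_Phi n lam alp Phi j k x t y p : (k < n)%nat ->
  d_y k (Fof n lam alp Phi j) x t y p =
  Derive (fun s => Phi x t (if Nat.eqb j k then s else y j) (p j) (rsum n y + (s - y k)) (rsum n p)
     (Ag n alp y p + ((p k ^ 2 - alp k ^ 2) / (2 * s) - (p k ^ 2 - alp k ^ 2) / (2 * y k)))
     (Lg n lam y + (lam k * s - lam k * y k))) (y k).
Proof.
  intros Hk. unfold d_y, Fof. apply Derive_ext. intros s.
  unfold Ag, Lg.
  rewrite (rsum_upd n y k s Hk).
  rewrite (rsum_upd_gen n (fun m v => (p m ^ 2 - alp m ^ 2) / (2 * v)) y k s Hk).
  rewrite (rsum_upd_gen n (fun m v => lam m * v) y k s Hk).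
  unfold upd at 1. reflexivity.
Qed.

Lemma dp_Phi n lam alp Phi j k x t y p : (k < n)%nat ->
  d_p k (Fof n lam alp Phi j) x t y p =
  Derive (fun s => Phi x t (y j) (if Nat.eqb j k then s else p j) (rsum n y) (rsum n p + (s - p k))
     (Ag n alp y p + ((s ^ 2 - alp k ^ 2) / (2 * y k) - (p k ^ 2 - alp k ^ 2) / (2 * y k)))
     (Lg n lam y)) (p k).
Proof.
  intros Hk. unfold d_p, Fof. apply Derive_ext. intros s.
  unfold Ag.
  rewrite (rsum_upd n p k s Hk).
  rewrite (rsum_upd_gen n (fun m v => (v ^ 2 - alp m ^ 2) / (2 * y m)) p k s Hk).
  unfold upd at 1. reflexivity.
Qed.

Lemma sumFA n lam alp x t y p m :
  rsum m (fun k => FA n lam alp k x t y p) = Ag m alp y p + 2 * u_fn n x t y p * rsum m y - 2 * Lg m lam y.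
Proof. unfold Ag, Lg. induction m. simpl; ring. rewrite !rsum_S, IHm. unfold FA. ring. Qed.

Lemma sumGB n lam alp x t y p m :
  rsum m (fun k => GB n lam alp k x t y p) = 2 * ux_fn n lam alp x t y p * rsum m y - 2 * u_fn n x t y p * rsum m p - 4 * rsum m (fun k => lam k * p k).
Proof. induction m. simpl; ring. rewrite !rsum_S, IHm. unfold GB. ring. Qed.

Lemma rsum_lin n d f1 f2 f3 cS cP cA cL c :
  rsum n (fun k => d k + cS * f1 k + cP * f2 k + cA * (2 * c * f1 k - 2 * f3 k) + cL * f3 k)
  = rsum n d + cS * rsum n f1 + cP * rsum n f2 + cA * (2 * c * rsum n f1 - 2 * rsum n f3) + cL * rsum n f3.
Proof. induction n. simpl; ring. rewrite !rsum_S, IHn. ring. Qed.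

Lemma rsum_lin2 n d f1 cS :
  rsum n (fun k => d k + cS * f1 k) = rsum n d + cS * rsum n f1.
Proof. induction n. simpl; ring. rewrite !rsum_S, IHn. ring. Qed.

Lemma TDx_gen n lam alp (F : jet) j x t y p X Y cS cP cA cL :
  (j < n)%nat -> (forall k, (k < n)%nat -> y k <> 0) ->
  (forall k, (k < n)%nat -> d_y k F x t y p = (if Nat.eqb j k then X else 0) + cS + cA * (- (p k ^ 2 - alp k ^ 2) / (2 * y k ^ 2)) + cL * lam k) ->
  (forall k, (k < n)%nat -> d_p k F x t y p = (if Nat.eqb j k then Y else 0) + cP + cA * (p k / y k)) ->
  TDx n (FA n lam alp) F x t y p = d_x F x t y p + p j * X + FA n lam alp j x t y p * Y + cS * rsum n p
    + cP * (Ag n alp y p + 2 * u_fn n x t y p * rsum n y - 2 * Lg n lam y)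
    + cA * (2 * u_fn n x t y p * rsum n p - 2 * rsum n (fun k => lam k * p k)) + cL * rsum n (fun k => lam k * p k).
Proof.
  intros Hj Hy Hdy Hdp. unfold TDx.
  rewrite (rsum_ext _ _ _ (fun k Hk => f_equal (fun z => p k * z) (Hdy k Hk))).
  rewrite (rsum_ext _ _ _ (fun k Hk => f_equal (fun z => FA n lam alp k x t y p * z) (Hdp k Hk))).
  rewrite Rplus_assoc, rsum_plus.
  rewrite (rsum_ext _ _ (fun k => (if Nat.eqb j k then p j * X + FA n lam alp j x t y p * Y else 0) + cS * p k + cP * FA n lam alp k x t y p + cA * (2 * u_fn n x t y p * p k - 2 * (lam k * p k)) + cL * (lam k * p k))).
  2:{ intros k Hk. specialize (Hy k Hk). destruct (Nat.eqb_spec j k).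
      - subst. unfold FA. field. auto.
      - unfold FA. field. auto. }
  rewrite rsum_lin, rsum_delta by auto. rewrite sumFA. ring.
Qed.

Lemma TDt_gen n Gt Ht (F : jet) j x t y p X Y cS :
  (j < n)%nat ->
  (forall k, (k < n)%nat -> d_y k F x t y p = (if Nat.eqb j k then X else 0) + cS) ->
  (forall k, (k < n)%nat -> d_p k F x t y p = (if Nat.eqb j k then Y else 0)) ->
  TDt n Gt Ht F x t y p = d_t F x t y p + Gt j x t y p * X + cS * rsum n (fun k => Gt k x t y p) + Ht j x t y p * Y.
Proof.
  intros Hj Hdy Hdp. unfold TDt.
  rewrite (rsum_ext _ _ _ (fun k Hk => f_equal (fun z => Gt k x t y p * z) (Hdy k Hk))).
  rewrite (rsum_ext _ _ _ (fun k Hk => f_equal (fun z => Ht k x t y p * z) (Hdp k Hk))).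
  rewrite (rsum_ext _ (fun k => Gt k x t y p * ((if Nat.eqb j k then X else 0) + cS))
     (fun k => (if Nat.eqb j k then Gt j x t y p * X else 0) + cS * Gt k x t y p)).
  2:{ intros k Hk. destruct (Nat.eqb_spec j k); [subst|]; ring. }
  rewrite (rsum_ext _ (fun k => Ht k x t y p * (if Nat.eqb j k then Y else 0))
     (fun k => (if Nat.eqb j k then Ht j x t y p * Y else 0))).
  2:{ intros k Hk. destruct (Nat.eqb_spec j k); [subst|]; ring. }
  rewrite rsum_lin2, !rsum_delta by auto. ring.
Qed.

Definition Dom n (t : R) (y : nat -> R) := t <> 0 /\ forall k, (k < n)%nat -> y k <> 0.

Lemma locally_neq0 a : a <> 0 -> locally a (fun s => s <> 0).
Proof.
  intros H. exists (mkposreal (Rabs a) (Rabs_pos_lt a H)). intros s Hs E. subst s.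
  change (Rabs (0 - a) < Rabs a) in Hs. rewrite Rminus_0_l, Rabs_Ropp in Hs. lra.
Qed.

Lemma Dom_upd n t y k s : Dom n t y -> (k < n)%nat -> s <> 0 -> Dom n t (upd y k s).
Proof.
  intros [Ht Hy] Hk Hs. split; auto. intros i Hi. unfold upd. destruct (Nat.eqb_spec i k); auto.
Qed.

Lemma ext_dx (f g : jet) x t y p n : (forall x t y p, Dom n t y -> f x t y p = g x t y p) -> Dom n t y ->
  d_x f x t y p = d_x g x t y p.
Proof. intros H HD. unfold d_x. apply Derive_ext. intros s. auto. Qed.

Lemma ext_dp (f g : jet) k x t y p n : (forall x t y p, Dom n t y -> f x t y p = g x t y p) -> Dom n t y ->
  d_p k f x t y p = d_p k g x t y p.
Proof. intros H HD. unfold d_p. apply Derive_ext. intros s. auto. Qed.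

Lemma ext_dt (f g : jet) x t y p n : (forall x t y p, Dom n t y -> f x t y p = g x t y p) -> Dom n t y ->
  d_t f x t y p = d_t g x t y p.
Proof.
  intros H HD. unfold d_t. apply Derive_ext_loc.
  apply (filter_imp (fun s => s <> 0)); [|apply locally_neq0, HD].
  intros s Hs. apply H. destruct HD; split; auto.
Qed.

Lemma ext_dy (f g : jet) k x t y p n : (forall x t y p, Dom n t y -> f x t y p = g x t y p) -> Dom n t y ->
  (k < n)%nat -> d_y k f x t y p = d_y k g x t y p.
Proof.
  intros H HD Hk. unfold d_y. apply Derive_ext_loc.
  apply (filter_imp (fun s => s <> 0)); [|apply locally_neq0, HD, Hk].
  intros s Hs. apply H. apply Dom_upd; auto.
Qed.

Lemma ext_TDx n Fxx (f g : jet) x t y p : (forall x t y p, Dom n t y -> f x t y p = g x t y p) -> Dom n t y ->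
  TDx n Fxx f x t y p = TDx n Fxx g x t y p.
Proof.
  intros H HD. unfold TDx. rewrite (ext_dx f g x t y p n H HD).
  rewrite (rsum_ext _ (fun k => p k * d_y k f x t y p) (fun k => p k * d_y k g x t y p)).
  2:{ intros k Hk. rewrite (ext_dy f g k x t y p n H HD Hk). auto. }
  rewrite (rsum_ext _ (fun k => Fxx k x t y p * d_p k f x t y p) (fun k => Fxx k x t y p * d_p k g x t y p)).
  2:{ intros k Hk. rewrite (ext_dp f g k x t y p n H HD). auto. }
  reflexivity.
Qed.

Lemma ext_TDt n Gt Ht (f g : jet) x t y p : (forall x t y p, Dom n t y -> f x t y p = g x t y p) -> Dom n t y ->
  TDt n Gt Ht f x t y p = TDt n Gt Ht g x t y p.
Proof.
  intros H HD. unfold TDt. rewrite (ext_dt f g x t y p n H HD).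
  rewrite (rsum_ext _ (fun k => Gt k x t y p * d_y k f x t y p) (fun k => Gt k x t y p * d_y k g x t y p)).
  2:{ intros k Hk. rewrite (ext_dy f g k x t y p n H HD Hk). auto. }
  rewrite (rsum_ext _ (fun k => Ht k x t y p * d_p k f x t y p) (fun k => Ht k x t y p * d_p k g x t y p)).
  2:{ intros k Hk. rewrite (ext_dp f g k x t y p n H HD). auto. }
  reflexivity.
Qed.

Definition Ufun (x t S : R) := x / (6 * t) + / (3 * t) * S.
Definition Phi_u (x t yj pj S P A L : R) := x / (6 * t) + / (3 * t) * S.
Definition Phi_ux (x t yj pj S P A L : R) := / (6 * t) + / (3 * t) * P.
Definition Phi_uxx (x t yj pj S P A L : R) := / (3 * t) * (A + 2 * Ufun x t S * S - 2 * L).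

Lemma u_Fof n lam alp : u_fn n = Fof n lam alp Phi_u 0.
Proof. reflexivity. Qed.

Ltac nz := repeat apply Rmult_integral_contrapositive_currified; try assumption; try lra; try (apply pow_nonzero; assumption).
Ltac fin := first [ solve [field; repeat split; nz] | solve [repeat split; nz] ].

Lemma test n lam alp x t y p j k : t <> 0 -> (forall k, (k < n)%nat -> y k <> 0) -> (k < n)%nat ->
  d_y k (Fof n lam alp Phi_uxx j) x t y p = (if Nat.eqb j k then 0 else 0) + / (3 * t) * (2 * / (3 * t) * rsum n y + 2 * Ufun x t (rsum n y))
    + / (3 * t) * (- (p k ^ 2 - alp k ^ 2) / (2 * y k ^ 2)) + (- 2 / (3 * t)) * lam k.
Proof.
  intros Ht Hy Hk. specialize (Hy k Hk). rewrite (dy_Phi _ _ _ _ _ _ _ _ _ _ Hk).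
  destruct (Nat.eqb_spec j k) as [<-|?]; apply is_derive_unique; cbv beta iota delta [Phi_uxx Ufun]; auto_derive; fin.
Qed.

Definition Phi_FA (lam alp : nat -> R) j (x t yj pj S P A L : R) :=
  (pj ^ 2 - alp j ^ 2) / (2 * yj) + 2 * (x / (6 * t) + / (3 * t) * S - lam j) * yj.
Definition Phi_GB (lam : nat -> R) j (x t yj pj S P A L : R) :=
  2 * (/ (6 * t) + / (3 * t) * P) * yj - 2 * (Ufun x t S + 2 * lam j) * pj.
Definition Phi_H (lam alp : nat -> R) j (x t yj pj S P A L : R) :=
  2 * yj / (3 * t) * (A + 2 * Ufun x t S * S - 2 * L) - 2 * (Ufun x t S + 2 * lam j) * Phi_FA lam alp j x t yj pj S P A L.

Lemma FA_Fof n lam alp j : FA n lam alp j = Fof n lam alp (Phi_FA lam alp j) j.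
Proof. reflexivity. Qed.

Ltac dtac Hy j := intros k Hk; pose proof (Hy k Hk);
  (rewrite (dy_Phi _ _ _ _ _ _ _ _ _ _ Hk) || rewrite (dp_Phi _ _ _ _ _ _ _ _ _ _ Hk));
  destruct (Nat.eqb_spec j k) as [<-|?]; apply is_derive_unique;
  cbv beta iota delta [Phi_u Phi_ux Phi_uxx Phi_FA Phi_GB Phi_H Ufun]; auto_derive; fin.

Ltac dxtac := unfold d_x, d_t, Fof; apply is_derive_unique;
  cbv beta iota delta [Phi_u Phi_ux Phi_uxx Phi_FA Phi_GB Phi_H Ufun]; auto_derive; fin.


Lemma TDx_u n lam alp x t y p : (0 < n)%nat -> t <> 0 -> (forall k, (k < n)%nat -> y k <> 0) ->
  TDx n (FA n lam alp) (u_fn n) x t y p = / (6 * t) + / (3 * t) * rsum n p.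
Proof.
  intros Hn Ht Hy. rewrite (u_Fof n lam alp).
  rewrite (TDx_gen n lam alp _ 0 x t y p 0 0 (/ (3 * t)) 0 0 0 Hn Hy).
  - replace (d_x (Fof n lam alp Phi_u 0) x t y p) with (/ (6 * t)) by (symmetry; dxtac).
    ring.
  - dtac Hy 0%nat.
  - dtac Hy 0%nat.
Qed.

Lemma ux_val n lam alp x t y p : (0 < n)%nat -> t <> 0 -> (forall k, (k < n)%nat -> y k <> 0) ->
  ux_fn n lam alp x t y p = Fof n lam alp Phi_ux 0 x t y p.
Proof. intros. unfold ux_fn. rewrite TDx_u by auto. reflexivity. Qed.

Lemma TDx_ux n lam alp x t y p : (0 < n)%nat -> t <> 0 -> (forall k, (k < n)%nat -> y k <> 0) ->
  TDx n (FA n lam alp) (Fof n lam alp Phi_ux 0) x t y p = Fof n lam alp Phi_uxx 0 x t y p.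
Proof.
  intros Hn Ht Hy.
  rewrite (TDx_gen n lam alp _ 0 x t y p 0 0 0 (/ (3 * t)) 0 0 Hn Hy).
  - replace (d_x (Fof n lam alp Phi_ux 0) x t y p) with 0 by (symmetry; dxtac).
    unfold Fof, Phi_uxx, Ufun, u_fn. field. auto.
  - dtac Hy 0%nat.
  - dtac Hy 0%nat.
Qed.

Lemma uxx_val n lam alp x t y p : (0 < n)%nat -> t <> 0 -> (forall k, (k < n)%nat -> y k <> 0) ->
  TDx n (FA n lam alp) (TDx n (FA n lam alp) (u_fn n)) x t y p = Fof n lam alp Phi_uxx 0 x t y p.
Proof.
  intros Hn Ht Hy.
  rewrite (ext_TDx n _ _ (Fof n lam alp Phi_ux 0)).
  - apply TDx_ux; auto.
  - intros x' t' y' p' [Ht' Hy']. apply (ux_val n lam alp); auto.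
  - split; auto.
Qed.

Definition TDx_uxx_val n lam alp x t y p :=
  let S := rsum n y in let U := Ufun x t S in
  / (3 * t) * (2 * / (6 * t) * S) + p 0%nat * 0 + FA n lam alp 0 x t y p * 0
  + / (3 * t) * (2 * / (3 * t) * S + 2 * U) * rsum n p
  + 0 * (Ag n alp y p + 2 * u_fn n x t y p * rsum n y - 2 * Lg n lam y)
  + / (3 * t) * (2 * u_fn n x t y p * rsum n p - 2 * rsum n (fun k => lam k * p k))
  + (-2 / (3 * t)) * rsum n (fun k => lam k * p k).

Lemma TDx_uxx n lam alp x t y p : (0 < n)%nat -> t <> 0 -> (forall k, (k < n)%nat -> y k <> 0) ->
  TDx n (FA n lam alp) (Fof n lam alp Phi_uxx 0) x t y p = TDx_uxx_val n lam alp x t y p.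
Proof.
  intros Hn Ht Hy. unfold TDx_uxx_val.
  rewrite (TDx_gen n lam alp _ 0 x t y p 0 0 (/ (3 * t) * (2 * / (3 * t) * rsum n y + 2 * Ufun x t (rsum n y))) 0 (/ (3 * t)) (-2 / (3 * t)) Hn Hy).
  - replace (d_x (Fof n lam alp Phi_uxx 0) x t y p) with (/ (3 * t) * (2 * / (6 * t) * rsum n y)) by (symmetry; dxtac).
    reflexivity.
  - dtac Hy 0%nat.
  - dtac Hy 0%nat.
Qed.

Lemma uxxx_val n lam alp x t y p : (0 < n)%nat -> t <> 0 -> (forall k, (k < n)%nat -> y k <> 0) ->
  TDx n (FA n lam alp) (TDx n (FA n lam alp) (TDx n (FA n lam alp) (u_fn n))) x t y p = TDx_uxx_val n lam alp x t y p.
Proof.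
  intros Hn Ht Hy.
  rewrite (ext_TDx n _ _ (Fof n lam alp Phi_uxx 0)).
  - apply TDx_uxx; auto.
  - intros x' t' y' p' [Ht' Hy']. apply (uxx_val n lam alp); auto.
  - split; auto.
Qed.

Lemma GB_val n lam alp j x t y p : (0 < n)%nat -> t <> 0 -> (forall k, (k < n)%nat -> y k <> 0) ->
  GB n lam alp j x t y p = Fof n lam alp (Phi_GB lam j) j x t y p.
Proof. intros. unfold GB. rewrite ux_val by auto. reflexivity. Qed.

Lemma TDx_GB n lam alp j x t y p : (0 < n)%nat -> (j < n)%nat -> t <> 0 -> (forall k, (k < n)%nat -> y k <> 0) ->
  TDx n (FA n lam alp) (Fof n lam alp (Phi_GB lam j) j) x t y p = Fof n lam alp (Phi_H lam alp j) j x t y p.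
Proof.
  intros Hn Hj Ht Hy.
  rewrite (TDx_gen n lam alp _ j x t y p (2 * (/ (6 * t) + / (3 * t) * rsum n p)) (- 2 * (Ufun x t (rsum n y) + 2 * lam j))
     (- 2 * / (3 * t) * p j) (2 * / (3 * t) * y j) 0 0 Hj Hy).
  - replace (d_x (Fof n lam alp (Phi_GB lam j) j) x t y p) with (- 2 * / (6 * t) * p j) by (symmetry; dxtac).
    unfold Fof, Phi_H, Phi_FA, Ufun, FA, u_fn. field. auto.
  - dtac Hy j.
  - dtac Hy j.
Qed.

Lemma HB_val n lam alp j x t y p : (0 < n)%nat -> (j < n)%nat -> t <> 0 -> (forall k, (k < n)%nat -> y k <> 0) ->
  HB n lam alp j x t y p = Fof n lam alp (Phi_H lam alp j) j x t y p.
Proof.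
  intros Hn Hj Ht Hy. unfold HB.
  rewrite (ext_TDx n _ _ (Fof n lam alp (Phi_GB lam j) j)).
  - apply TDx_GB; auto.
  - intros x' t' y' p' [Ht' Hy']. apply (GB_val n lam alp); auto.
  - split; auto.
Qed.

Definition TDx_H_val n lam alp j x t y p :=
  let S := rsum n y in let U := Ufun x t S in let yj := y j in let pj := p j in
  let F := Phi_FA lam alp j x t yj pj S 0 0 0 in
  let Q := Ag n alp y p + 2 * U * S - 2 * Lg n lam y in
  let Fy := - (pj ^ 2 - alp j ^ 2) / (2 * yj ^ 2) + 2 * (U - lam j) in
  (2 * yj / (3 * t) * (2 * / (6 * t) * S) - 2 * / (6 * t) * F - 2 * (U + 2 * lam j) * (2 * / (6 * t) * yj))
  + pj * (2 / (3 * t) * Q - 2 * (U + 2 * lam j) * Fy)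
  + FA n lam alp j x t y p * (- 2 * (U + 2 * lam j) * (pj / yj))
  + (2 * yj / (3 * t) * (2 * / (3 * t) * S + 2 * U) - 2 * / (3 * t) * F - 2 * (U + 2 * lam j) * (2 * / (3 * t) * yj)) * rsum n p
  + 0 * (Ag n alp y p + 2 * u_fn n x t y p * rsum n y - 2 * Lg n lam y)
  + 2 * yj / (3 * t) * (2 * u_fn n x t y p * rsum n p - 2 * rsum n (fun k => lam k * p k))
  + (2 * yj / (3 * t) * (-2)) * rsum n (fun k => lam k * p k).

Lemma TDx_H n lam alp j x t y p : (0 < n)%nat -> (j < n)%nat -> t <> 0 -> (forall k, (k < n)%nat -> y k <> 0) ->
  TDx n (FA n lam alp) (Fof n lam alp (Phi_H lam alp j) j) x t y p = TDx_H_val n lam alp j x t y p.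
Proof.
  intros Hn Hj Ht Hy. pose proof (Hy j Hj) as Hyj. unfold TDx_H_val. cbv zeta.
  rewrite (TDx_gen n lam alp _ j x t y p
     (2 / (3 * t) * (Ag n alp y p + 2 * Ufun x t (rsum n y) * rsum n y - 2 * Lg n lam y) - 2 * (Ufun x t (rsum n y) + 2 * lam j) * (- (p j ^ 2 - alp j ^ 2) / (2 * y j ^ 2) + 2 * (Ufun x t (rsum n y) - lam j)))
     (- 2 * (Ufun x t (rsum n y) + 2 * lam j) * (p j / y j))
     (2 * y j / (3 * t) * (2 * / (3 * t) * rsum n y + 2 * Ufun x t (rsum n y)) - 2 * / (3 * t) * Phi_FA lam alp j x t (y j) (p j) (rsum n y) 0 0 0 - 2 * (Ufun x t (rsum n y) + 2 * lam j) * (2 * / (3 * t) * y j))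
     0 (2 * y j / (3 * t)) (2 * y j / (3 * t) * (-2)) Hj Hy).
  - replace (d_x (Fof n lam alp (Phi_H lam alp j) j) x t y p) with
      (2 * y j / (3 * t) * (2 * / (6 * t) * rsum n y) - 2 * / (6 * t) * Phi_FA lam alp j x t (y j) (p j) (rsum n y) 0 0 0 - 2 * (Ufun x t (rsum n y) + 2 * lam j) * (2 * / (6 * t) * y j)) by (symmetry; pose proof (Hy j Hj); dxtac).
    reflexivity.
  - dtac Hy j.
  - dtac Hy j.
Qed.

Theorem proposition1 (n : nat) (lam alp : nat -> R) :
  (1 <= n)%nat ->
  (forall i j : nat, (i < n)%nat -> (j < n)%nat -> i <> j -> lam i <> lam j) ->
  forall (x t : R) (y p : nat -> R),
    t <> 0 ->
    (forall k : nat, (k < n)%nat -> y k <> 0) ->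
    (forall j : nat, (j < n)%nat ->
       TotDt n lam alp (FA n lam alp j) x t y p
       = TotDx n lam alp (TotDx n lam alp (GB n lam alp j)) x t y p)
    /\
    TotDt n lam alp (u_fn n) x t y p
    = TotDx n lam alp (TotDx n lam alp (TotDx n lam alp (u_fn n))) x t y p
      - 6 * u_fn n x t y p * TotDx n lam alp (u_fn n) x t y p.
Proof.
  intros H1 _ x t y p Ht Hy.
  assert (Hn : (0 < n)%nat) by lia.
  split.
  - intros j Hj. pose proof (Hy j Hj) as Hyj. unfold TotDt, TotDx.
    rewrite (TDt_gen n _ _ (FA n lam alp j) j x t y p
      (- (p j ^ 2 - alp j ^ 2) / (2 * y j ^ 2) + 2 * (Ufun x t (rsum n y) - lam j)) (p j / y j)
      (2 * / (3 * t) * y j) Hj).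
    + replace (d_t (FA n lam alp j) x t y p) with (2 * (- (x / (6 * t ^ 2)) - rsum n y / (3 * t ^ 2)) * y j)
        by (symmetry; rewrite (FA_Fof n lam alp j); dxtac).
      rewrite sumGB, (ux_val n lam alp) by auto.
      rewrite (GB_val n lam alp j) by auto.
      rewrite (HB_val n lam alp j) by auto.
      change (TDx n (FA n lam alp) (GB n lam alp j)) with (HB n lam alp j).
      rewrite (ext_TDx n _ _ (Fof n lam alp (Phi_H lam alp j) j)).
      * rewrite TDx_H by auto.
        unfold TDx_H_val, Fof, Phi_H, Phi_GB, Phi_ux, Phi_FA, FA, Ufun, u_fn. field. auto.
      * intros x' t' y' p' [Ht' Hy']. apply (HB_val n lam alp); auto.
      * split; auto.
    + rewrite (FA_Fof n lam alp j). intros k Hk. pose proof (Hy k Hk).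
      rewrite (dy_Phi _ _ _ _ _ _ _ _ _ _ Hk).
      destruct (Nat.eqb_spec j k) as [<-|?]; apply is_derive_unique;
      cbv beta iota delta [Phi_FA Ufun]; auto_derive; fin.
    + rewrite (FA_Fof n lam alp j). intros k Hk. pose proof (Hy k Hk).
      rewrite (dp_Phi _ _ _ _ _ _ _ _ _ _ Hk).
      destruct (Nat.eqb_spec j k) as [<-|?]; apply is_derive_unique;
      cbv beta iota delta [Phi_FA Ufun]; auto_derive; fin.
  - unfold TotDt, TotDx.
    rewrite (TDt_gen n _ _ (u_fn n) 0 x t y p 0 0 (/ (3 * t)) Hn).
    + replace (d_t (u_fn n) x t y p) with (- (x / (6 * t ^ 2)) - rsum n y / (3 * t ^ 2))
        by (symmetry; rewrite (u_Fof n lam alp); dxtac).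
      rewrite sumGB, (ux_val n lam alp) by auto.
      rewrite (uxxx_val n lam alp) by auto.
      rewrite (TDx_u n lam alp) by auto.
      unfold TDx_uxx_val, Fof, Phi_ux, FA, Ufun, u_fn. field. auto.
    + rewrite (u_Fof n lam alp). intros k Hk. pose proof (Hy k Hk).
      rewrite (dy_Phi _ _ _ _ _ _ _ _ _ _ Hk).
      destruct (Nat.eqb_spec 0 k) as [<-|?]; apply is_derive_unique;
      cbv beta iota delta [Phi_u]; auto_derive; fin.
    + rewrite (u_Fof n lam alp). intros k Hk. pose proof (Hy k Hk).
      rewrite (dp_Phi _ _ _ _ _ _ _ _ _ _ Hk).
      destruct (Nat.eqb_spec 0 k) as [<-|?]; apply is_derive_unique;
      cbv beta iota delta [Phi_u]; auto_derive; fin.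
Qed.
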